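(* Let $B$ be a norming region. For the $B$-biased branching Markov chain, a blue individual located at $x\notin B$ produces $n$ children with probability $d^{\mathrm{s.b.}}_x(n)=n\,d_x(n)/m_x$; conditionally on producing $n$ children, the location of the blue child and the locations of the $n-1$ white children are independent, each white child's location has law $p(x,\cdot)$, and the blue child's location $y$ has law $(p^h_{x,y})_{y\in S}$, where $p^h_{x,y}=\mathbf 1_{B^c}(x)\,q_{x,y}h(y)/h(x)$.
   Context: $S$ countable, $p=(p_{x,y})$ a stochastic matrix on $S$, $(d_x)_{x\in S}$ probability distributions on $\mathbb N_0$, $m_x=\sum_m m\,d_x(m)$, $q_{x,y}=m_xp_{x,y}$, $Q=(q_{x,y})$, Green's function $g(x,y)=\sum_{n\ge0}(Q^n)_{x,y}$, assumed finite. For a branching Markov chain started from one individual at $x$ (each individual at $z$ independently has a $d_z$-distributed number of children at independent $p(z,\cdot)$-distributed locations), $\mathcal H_B$ denotes the set of individuals located in $B$ none of whose strict ancestors is located in $B$. A norming region is a finite $B\subset S$ with $\sum_{y\in B}g(x,y)>0$ for all $x$; $h(x)=\mathbb E^x[\#\mathcal H_B]\in(0,\infty)$. One has $h=Qh$ on $B^c$ and $h=1$ on $B$. The $B$-biased branching Markov chain is a two-type branching Markov chain with types white and blue (state space $S\times\{\mathrm{white},\mathrm{blue}\}$): a white individual, and a blue individual located in $B$, reproduce as in the original chain ($d_x$-distributed number of children at independent $p(x,\cdot)$-locations) and all their children are white. A blue individual at $x\notin B$ produces $n\in\mathbb N$ children with (ordered) locations $y_1,\dots,y_n$ with probability $\frac{1}{h(x)}d_x(n)\prod_{k=1}^np_{x,y_k}\sum_{k=1}^nh(y_k)$;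 given this, the $k$-th child is coloured blue with probability $h(y_k)/\sum_{l=1}^nh(y_l)$ and all other children white. *)

(* Defs.v *)
From HB Require Import structures.
From mathcomp Require Import all_boot all_order all_algebra.
From mathcomp Require Import all_classical all_reals all_analysis.
Set Implicit Arguments. Unset Strict Implicit. Unset Printing Implicit Defensive.
Import Order.TTheory GRing.Theory Num.Theory.
Local Open Scope classical_set_scope.
Local Open Scope ring_scope.

Section BMC.
Variables (R : realType) (S : countType).
Variables (p : S -> S -> R) (d : S -> nat -> R) (B : set S).

Definition is_stochastic : Prop :=
  (forall x y, 0 <= p x y) /\ (forall x, \esum_(y in [set: S]) (p x y)%:E = 1%E).

Definition is_offspring_law : Prop :=
  (forall x n, 0 <= d x n) /\ (forall x, \esum_(n in [set: nat]) (d x n)%:E = 1%E).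

Definition mean (x : S) : \bar R := \esum_(n in [set: nat]) (n%:R * d x n)%:E.
Definition meanR (x : S) : R := fine (mean x).

Definition qm (x y : S) : \bar R := (mean x * (p x y)%:E)%E.

Fixpoint Qpow (n : nat) (x y : S) : \bar R :=
  match n with
  | 0 => (if x == y then 1 else 0)%E
  | n.+1 => \esum_(z in [set: S]) (qm x z * Qpow n z y)%E
  end.

Definition green (x y : S) : \bar R := \esum_(n in [set: nat]) Qpow n x y.

Definition green_finite : Prop := forall x y, (green x y < +oo)%E.

Definition norming_region : Prop :=
  finite_set B /\ forall x, (0 < \esum_(y in B) green x y)%E.

(* hitn n x = expected number of individuals of generation n that lie in B
   and have no strict ancestor in B (many-to-one / first-moment formula),
   for the branching Markov chain started with one individual at x. *)
Fixpoint hitn (n : nat) (x : S) : \bar R :=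
  match n with
  | 0 => (if x \in B then 1 else 0)%E
  | n.+1 => (if x \in B then 0 else \esum_(z in [set: S]) (qm x z * hitn n z))%E
  end.

Definition hB (x : S) : \bar R := \esum_(n in [set: nat]) hitn n x.
Definition hR (x : S) : R := fine (hB x).

(* Law of the offspring of a blue individual at x (outside B) in the
   B-biased branching Markov chain: probability that it has n children
   with ordered locations y_1..y_n AND that the k-th child is the blue one. *)
Definition blue_offspring (x : S) (n : nat) (ky : 'I_n * {ffun 'I_n -> S}) : R :=
  let k := ky.1 in let y := ky.2 in
  (hR x)^-1 * d x n * (\prod_(i < n) p x (y i)) * (\sum_(i < n) hR (y i))
  * (hR (y k) / \sum_(i < n) hR (y i)).

Definition dsb (x : S) (n : nat) : R := n%:R * d x n / meanR x.

Definition ph (x y : S) : R :=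
  (if x \in B then 0 else 1) * (meanR x * p x y) * hR y / hR x.

(* Event: n = m.+1 children, the blue child is at z, and the white children,
   listed in their birth order, are at w 0, ..., w (m-1). *)
Definition blue_event (m : nat) (z : S) (w : {ffun 'I_m -> S})
  : set ('I_m.+1 * {ffun 'I_m.+1 -> S}) :=
  [set ky : 'I_m.+1 * {ffun 'I_m.+1 -> S} |
     ky.2 ky.1 = z /\ forall j : 'I_m, ky.2 (lift ky.1 j) = w j].

End BMC.

(* Main.v *)
Require Import Defs.
From HB Require Import structures.
From mathcomp Require Import all_boot all_order all_algebra.
From mathcomp Require Import all_classical all_reals all_analysis.
From mathcomp.algebra_tactics Require Import ring.
Import Order.TTheory GRing.Theory Num.Theory.
Local Open Scope classical_set_scope.
Local Open Scope ring_scope.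

Section Gen.
Variable R : realType.
Local Open Scope ereal_scope.

Lemma esum_ge1 (T : choiceType) (I : set T) (a : T -> \bar R) t :
  I t -> a t <= \esum_(i in I) a i.
Proof.
move=> It; apply: esum_ge; exists [set t]; last by rewrite fsbig_set1.
by split; [exact: finite_set1| move=> ? ->].
Qed.

Lemma esum_gt0_ex (T : choiceType) (I : set T) (a : T -> \bar R) :
  (forall i, I i -> 0 <= a i) ->
  0 < \esum_(i in I) a i -> exists i, I i /\ 0 < a i.
Proof.
move=> a0 h; apply: contrapT => hn.
suff : \esum_(i in I) a i = 0 by move=> e; rewrite e ltxx in h.
apply: esum1 => i Ii; apply/eqP; apply: contrapT => /negP ne; apply: hn.
by exists i; split => //; rewrite lt_neqAle eq_sym ne a0.
Qed.

Lemma esumZl (T : choiceType) (I : set T) (a : T -> \bar R) (c : R) :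
  (0 <= c)%R -> (forall i, 0 <= a i) ->
  \esum_(i in I) (c%:E * a i) = c%:E * \esum_(i in I) a i.
Proof.
move=> c0 a0; rewrite /esum -ereal_supZl//; last first.
  by apply/set0P; exists 0; exists set0; [exact: fsets_set0| rewrite fsbig_set0].
congr ereal_sup; apply/seteqP; split => y /=.
  by move=> [A fA <-]; exists (\sum_(x \in A) a x); [exists A|rewrite ge0_mule_fsumr].
by move=> [z [A fA <-] <-]; exists A => //; rewrite ge0_mule_fsumr.
Qed.

Lemma esum_fin (T : finType) (a : T -> \bar R) : (forall i, 0 <= a i) ->
  \esum_(i in [set: T]) a i = \sum_(i : T) a i.
Proof.
move=> a0; rewrite esum_fset; [|exact: finite_finset|by []].
rewrite (fsbigE (enum T)) ?enum_uniq//.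
by rewrite big_enum_cond /=; apply: eq_bigl => i; rewrite in_setT.
by move=> i _; rewrite mem_enum.
Qed.

Lemma esum_swap (T1 T2 : choiceType) (I : set T1) (J : set T2) (a : T1 -> T2 -> \bar R) :
  (forall i j, 0 <= a i j) ->
  \esum_(i in I) \esum_(j in J) a i j = \esum_(j in J) \esum_(i in I) a i j.
Proof.
move=> a0; rewrite (esum_esum (J := fun _ => J)) // (esum_esum (J := fun _ => I))//.
rewrite (reindex_esum (I `*`` fun=> J) (J `*`` fun=> I) (fun k => (k.2, k.1)))//.
split.
- by move=> [i j] [/= Ii Jj].
- by move=> [i j] [i' j'] _ _ /= [-> ->].
- by move=> [j i] [/= Jj Ii]; exists (i, j).
Qed.


Lemma esum_prod (T : choiceType) n (f : 'I_n -> T -> R) :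
  (forall i s, 0 <= f i s)%R ->
  (forall i, \esum_(s in [set: T]) (f i s)%:E \is a fin_num) ->
  \esum_(y in [set: {ffun 'I_n -> T}]) (\prod_(i < n) f i (y i))%:E
  = (\prod_(i < n) fine (\esum_(s in [set: T]) (f i s)%:E))%:E.
Proof.
elim: n f => [|n IH] f f0 ffin.
  rewrite big_ord0.
  have -> : [set: {ffun 'I_0 -> T}] = [set @ffun0 _ (fun=> T) (card_ord 0)].
    apply/seteqP; split => y //= _; apply/ffunP => -[] //.
  by rewrite esum_set1 big_ord0.
pose e (sg : T * {ffun 'I_n -> T}) : {ffun 'I_n.+1 -> T} :=
  [ffun i => if unlift ord0 i is Some j then sg.2 j else sg.1].
have e0 sg : e sg ord0 = sg.1 by rewrite ffunE unlift_none.
have eS sg j : e sg (lift ord0 j) = sg.2 j by rewrite ffunE liftK.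
rewrite (reindex_esum ([set: T] `*`` fun=> [set: {ffun 'I_n -> T}]) _ e); last first.
  split.
  - by [].
  - move=> [s g] [s' g'] _ _ h; have := e0 (s, g); rewrite h e0 /= => ->.
    congr pair; apply/ffunP => j; by rewrite -[LHS](eS (s, g)) h eS.
  - move=> y _; exists (y ord0, [ffun j => y (lift ord0 j)]) => //.
    apply/ffunP => i; rewrite ffunE /=; case: unliftP => [j ->|->] //.
    by rewrite ffunE.
rewrite -(esum_esum (I := [set: T]) (J := fun=> [set: {ffun 'I_n -> T}])
  (a := fun s g => (\prod_(i < n.+1) f i (e (s, g) i))%:E)); last first.
  by move=> *; rewrite lee_fin; apply: prodr_ge0 => *; exact: f0.
have C0 : (0 <= \prod_(i < n) fine (\esum_(s in [set: T]) (f (lift ord0 i) s)%:E))%R.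
  by apply: prodr_ge0 => i _; apply: fine_ge0; apply: esum_ge0 => *; rewrite lee_fin.
transitivity (\esum_(s in [set: T])
   ((\prod_(i < n) fine (\esum_(s in [set: T]) (f (lift ord0 i) s)%:E))%:E * (f ord0 s)%:E)).
  apply: eq_esum => s _.
  under eq_esum do rewrite big_ord_recl e0 /= EFinM.
  under eq_esum do under eq_bigr do rewrite eS /=.
  rewrite esumZl //; last by move=> g; rewrite lee_fin; apply: prodr_ge0 => *; exact: f0.
  rewrite (IH (fun i => f (lift ord0 i))) //; first by rewrite muleC.
rewrite esumZl //; last by move=> *; rewrite lee_fin.
rewrite -(fineK (ffin ord0)) -EFinM big_ord_recl mulrC.
by [].
Qed.

End Gen.

Set Implicit Arguments. Unset Strict Implicit.

Section Model.
Variables (R : realType) (S : countType) (p : S -> S -> R) (d : S -> nat -> R) (B : set S).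
Hypotheses (Hs : is_stochastic p) (Hd : is_offspring_law d) (Hg : green_finite p d)
  (Hn : norming_region p d B).
Local Open Scope ereal_scope.

Lemma p_ge0 x y : (0 <= p x y)%R. Proof. by case: Hs => h _; exact: h. Qed.
Lemma d_ge0 x n : (0 <= d x n)%R. Proof. by case: Hd => h _; exact: h. Qed.

Lemma mean_ge0 x : 0 <= mean d x.
Proof. by apply: esum_ge0 => n _; rewrite lee_fin mulr_ge0 ?d_ge0. Qed.

Lemma qm_ge0 x y : 0 <= qm p d x y.
Proof. by rewrite /qm mule_ge0 ?mean_ge0 // lee_fin p_ge0. Qed.

Lemma Qpow_ge0 n x y : 0 <= Qpow p d n x y.
Proof.
elim: n x y => [|n IH] x y /=; first by case: ifP.
by apply: esum_ge0 => z _; apply: mule_ge0; [exact: qm_ge0|exact: IH].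
Qed.

Lemma hitn_ge0 n x : 0 <= hitn p d B n x.
Proof.
elim: n x => [|n IH] x /=; first by case: ifP.
case: ifP => // _.
by apply: esum_ge0 => z _; apply: mule_ge0; [exact: qm_ge0|exact: IH].
Qed.

Lemma hB_ge0 x : 0 <= hB p d B x.
Proof. by apply: esum_ge0 => n _; exact: hitn_ge0. Qed.

Lemma mean_fin x : mean d x < +oo.
Proof.
have [y py] : exists y, (0 < p x y)%R.
  have : 0 < \esum_(y in [set: S]) (p x y)%:E by case: Hs => _ ->; exact: lte01.
  move/esum_gt0_ex => [|y [_ hy]]; first by move=> *; rewrite lee_fin p_ge0.
  by exists y; rewrite -lte_fin.
rewrite ltey; apply/negP => /eqP minf.
have := Hg x y; rewrite ltey => /negP; apply.
rewrite -leye_eq.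
apply: (@le_trans _ _ (Qpow p d 1 x y)); last by apply: (@esum_ge1 _ _ _ _ 1%N).
rewrite /=; apply: le_trans (@esum_ge1 _ _ _ _ y _) => //.
by rewrite eqxx mule1 /qm minf gt0_mulye ?lte_fin.
Qed.


Lemma meanE x : mean d x = (meanR d x)%:E.
Proof. by rewrite /meanR fineK // ge0_fin_numE ?mean_ge0 ?mean_fin. Qed.

Lemma meanR_ge0 x : (0 <= meanR d x)%R.
Proof. by rewrite -lee_fin -meanE mean_ge0. Qed.

Lemma qmE x y : qm p d x y = (meanR d x * p x y)%:E.
Proof. by rewrite /qm meanE EFinM. Qed.

Lemma hitn_le n x : hitn p d B n x <= \esum_(y in B) Qpow p d n x y.
Proof.
elim: n x => [|n IH] x /=.
  case: ifPn => xB; last by apply: esum_ge0 => y _; case: ifP.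
  by apply: le_trans (@esum_ge1 _ _ _ _ x _); rewrite ?eqxx //; exact: set_mem.
case: ifPn => xB; first by apply: esum_ge0 => y _; apply: esum_ge0 => z _; apply: mule_ge0; [exact: qm_ge0|exact: Qpow_ge0].
apply: (@le_trans _ _ (\esum_(z in [set: S]) (qm p d x z * \esum_(y in B) Qpow p d n z y))).
  by apply: le_esum => z _; apply: lee_wpmul2l; [exact: qm_ge0|exact: IH].
rewrite -esum_swap; last by move=> *; apply: mule_ge0; [exact: qm_ge0|exact: Qpow_ge0].
apply: le_esum => z _; rewrite qmE esumZl //; last by move=> *; exact: Qpow_ge0.
by rewrite mulr_ge0 ?meanR_ge0 ?p_ge0.
Qed.

Lemma hB_fin x : hB p d B x < +oo.
Proof.
apply: (@le_lt_trans _ _ (\esum_(y in B) green p d x y)).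
  apply: (@le_trans _ _ (\esum_(n in [set: nat]) \esum_(y in B) Qpow p d n x y)).
    by apply: le_esum => n _; exact: hitn_le.
  by rewrite esum_swap //; move=> *; exact: Qpow_ge0.
case: Hn => finB _.
rewrite esum_fset //; last by move=> *; apply: esum_ge0 => *; exact: Qpow_ge0.
by rewrite fsbig_finite //; apply: lte_sum_pinfty => y _; exact: Hg.
Qed.

Lemma hBE x : hB p d B x = (hR p d B x)%:E.
Proof. by rewrite /hR fineK // ge0_fin_numE ?hB_ge0 ?hB_fin. Qed.

Lemma hR_ge0 x : (0 <= hR p d B x)%R.
Proof. by rewrite -lee_fin -hBE hB_ge0. Qed.

Lemma hB_rec x : x \notin B ->
  hB p d B x = \esum_(z in [set: S]) (qm p d x z * hB p d B z).
Proof.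
move=> xB.
rewrite /hB (esumID [set 0%N]); last by move=> *; exact: hitn_ge0.
rewrite setTI esum_set1 ?hitn_ge0 //= (negbTE xB) add0e setTI.
rewrite (@reindex_esum _ _ _ [set: nat] _ succn); last first.
  split.
  - by move=> n _ /=.
  - by move=> n n' _ _ /succn_inj.
  - move=> n /= n0; exists n.-1 => //; rewrite prednK // lt0n; exact/eqP.
under eq_esum do rewrite /= (negbTE xB).
rewrite esum_swap; last by move=> *; apply: mule_ge0; [exact: qm_ge0|exact: hitn_ge0].
apply: eq_esum => z _; rewrite qmE esumZl //; last by move=> *; exact: hitn_ge0.
by rewrite mulr_ge0 ?meanR_ge0 ?p_ge0.
Qed.

Lemma hB_pos_Qpow n : forall x y, y \in B -> 0 < Qpow p d n x y -> 0 < hB p d B x.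
Proof.
have inB x : x \in B -> 0 < hB p d B x.
  move=> xB; apply: lt_le_trans (@esum_ge1 _ _ _ _ 0%N _) => //=.
  by rewrite xB lte01.
elim: n => [|n IH] x y yB /=.
  by case: eqP => [->|]; [move=> _; exact: inB|rewrite ltxx].
move/esum_gt0_ex => [|z [_]].
  by move=> *; apply: mule_ge0; [exact: qm_ge0|exact: Qpow_ge0].
rewrite mule_ge0_gt0 ?qm_ge0 ?Qpow_ge0 // => /andP[qz /(IH _ _ yB) hz].
have [xB|xB] := boolP (x \in B); first exact: inB.
rewrite hB_rec //; apply: lt_le_trans (@esum_ge1 _ _ _ _ z _) => //.
exact: mule_gt0.
Qed.

Lemma hB_pos x : 0 < hB p d B x.
Proof.
case: Hn => _ /(_ x) /esum_gt0_ex [|y [yB]].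
  by move=> *; apply: esum_ge0 => *; exact: Qpow_ge0.
move/esum_gt0_ex => [|n [_ hn]]; first by move=> *; exact: Qpow_ge0.
exact: (@hB_pos_Qpow n x y (mem_set yB)).
Qed.

End Model.

Unset Implicit Arguments. Set Strict Implicit.

Lemma bo_simpl (R : realType) (S : countType) (p : S -> S -> R) (d : S -> nat -> R)
  (B : set S) x n (k : 'I_n) (y : {ffun 'I_n -> S}) :
  (forall z, 0 <= hR p d B z) ->
  blue_offspring p d B x (k, y) =
  (hR p d B x)^-1 * d x n * ((\prod_(i < n) p x (y i)) * hR p d B (y k)).
Proof.
move=> h0; rewrite /blue_offspring /=.
set Hs := \sum_(i < n) _.
have [H0|H0] := eqVneq Hs 0.
  have -> : hR p d B (y k) = 0.
    by apply: (psumr_eq0P (P := predT) (F := fun i => hR p d B (y i))) => // i _.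
  by rewrite H0 !(mulr0, mul0r).
by rewrite -[in LHS]mulrA (mulrC Hs) divfK // mulrA.
Qed.

Theorem mainTheorem2 (R : realType) (S : countType)
  (p : S -> S -> R) (d : S -> nat -> R) (B : set S) :
  is_stochastic p ->
  is_offspring_law d ->
  green_finite p d ->
  norming_region p d B ->
  forall x : S, x \notin B ->
    (forall n : nat,
       \esum_(ky in [set: 'I_n * {ffun 'I_n -> S}])
          (blue_offspring p d B x ky)%:E = (dsb d x n)%:E)
    /\
    (forall (m : nat) (z : S) (w : {ffun 'I_m -> S}),
       \esum_(ky in blue_event z w) (blue_offspring p d B x ky)%:E
       = (dsb d x m.+1 * ph p d B x z * \prod_(j < m) p x (w j))%:E).
Proof.
move=> Hs Hd Hg Hn x xB.
have h0 := hR_ge0 Hs Hd Hg Hn.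
have hE := hBE Hs Hd Hg Hn.
have p0 := p_ge0 Hs.
have d0 := d_ge0 Hd.
set hx := hR p d B x; set mx := meanR d x.
have hx0 : 0 < hx.
  by rewrite /hx /hR; apply: fine_gt0; rewrite (hB_pos Hs Hd Hg Hn) (hB_fin Hs Hd Hg Hn).
have mx0 : 0 <= mx by exact: (meanR_ge0 Hs Hd Hg).
have [sg [sgE hxE]] : exists sg, \esum_(z in [set: S]) (p x z * hR p d B z)%:E = sg%:E
    /\ hx = mx * sg.
  have := hB_rec Hs Hd Hg xB; rewrite hE.
  have qE := qmE Hs Hd Hg.
  under eq_esum do rewrite qE hE -EFinM -mulrA EFinM.
  rewrite esumZl //; last by move=> z; rewrite lee_fin mulr_ge0.
  have : (0 <= \esum_(z in [set: S]) (p x z * hR p d B z)%:E)%E.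
    by apply: esum_ge0 => z _; rewrite lee_fin mulr_ge0.
  case: (\esum_(z in [set: S]) (p x z * hR p d B z)%:E) => [r| |] //.
    by move=> _ /= [e]; exists r.
  move=> _; have [mxz|mxz] := eqVneq mx 0.
    by rewrite -/mx mxz [(0%:E * _)%E]mul0e => -[e]; move: hx0; rewrite /hx e ltxx.
  by rewrite muleC gt0_mulye // lte_fin lt_neqAle eq_sym mxz mx0.
have mxn0 : mx != 0 by apply/eqP => e; rewrite hxE e mul0r ltxx in hx0.
have sgn0 : sg != 0 by apply/eqP => e; rewrite hxE e mulr0 ltxx in hx0.
have sgE' := sgE.
split.
- move=> n.
  transitivity (\esum_(k in [set: 'I_n]) \esum_(y in [set: {ffun 'I_n -> S}])
      (blue_offspring p d B x (k, y))%:E).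
    rewrite esum_esum; last first.
      by move=> k y _ _; rewrite lee_fin bo_simpl // !mulr_ge0 ?invr_ge0 ?hR_ge0 ?prodr_ge0.
    have -> : [set: 'I_n] `*`` (fun=> [set: {ffun 'I_n -> S}]) = [set: 'I_n * {ffun 'I_n -> S}].
      by apply/seteqP; split.
    by apply: eq_esum => -[k y].
  transitivity (\esum_(k in [set: 'I_n]) ((hx^-1 * d x n)%:E * sg%:E)%E).
    apply: eq_esum => k _.
    under eq_esum do rewrite bo_simpl // EFinM.
    rewrite esumZl; last 2 first.
    - by rewrite mulr_ge0 // invr_ge0 ltW.
    - by move=> y; rewrite lee_fin mulr_ge0 // prodr_ge0.
    congr (_ * _)%E.
    pose f := fun (i : 'I_n) s => if i == k then p x s * hR p d B s else p x s.
    have f0 i s : 0 <= f i s by rewrite /f; case: ifP => _; rewrite ?mulr_ge0.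
    have fE i : \esum_(s in [set: S]) (f i s)%:E = (if i == k then sg else 1)%:E.
      rewrite /f; case: (i == k); first by rewrite sgE.
      by case: Hs => _ ->.
    rewrite (eq_esum (b := fun y : {ffun 'I_n -> S} => (\prod_(i < n) f i (y i))%:E)); last first.
      move=> y _; congr EFin.
      rewrite (bigD1 k) //= [in RHS](bigD1 k) //= /f eqxx.
      rewrite [in RHS](eq_bigr (fun i => p x (y i))); last by move=> i /negbTE ->.
      by rewrite mulrAC.
    rewrite esum_prod //; last by move=> i; rewrite fE.
    congr EFin.
    under eq_bigr do rewrite fE.
    rewrite (bigD1 k) //= eqxx big1 ?mulr1 //.
    by move=> i /negbTE ->.
  have sg0 : 0 <= sg.
    by rewrite -lee_fin -sgE; apply: esum_ge0 => z _; rewrite lee_fin mulr_ge0.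
  rewrite esum_fin; last by move=> k; rewrite -EFinM lee_fin !mulr_ge0 // invr_ge0 ltW.
  under eq_bigr do rewrite -EFinM.
  rewrite sumEFin sumr_const card_ord; congr EFin.
  rewrite /dsb -/mx hxE -[in LHS]mulr_natl.
  by field; rewrite mxn0 sgn0.
- move=> m z w.
  have hxn0 : hx != 0 by rewrite gt_eqF.
  pose Y (k : 'I_m.+1) : {ffun 'I_m.+1 -> S} :=
    [ffun i => if unlift k i is Some j then w j else z].
  have Yk k : Y k k = z by rewrite ffunE unlift_none.
  have Yl k j : Y k (lift k j) = w j by rewrite ffunE liftK.
  rewrite (@reindex_esum _ _ _ [set: 'I_m.+1] _ (fun k => (k, Y k))); last first.
    split.
    - by move=> k _; split => /=; [exact: Yk | exact: Yl].
    - by move=> k k' _ _ [].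
    - move=> [k y] [/= hz hw]; exists k => //; congr pair.
      apply/ffunP => i; rewrite ffunE; case: unliftP => [j ->|->]; [by rewrite hw|by rewrite hz].
  rewrite esum_fin; last first.
    by move=> k; rewrite lee_fin bo_simpl // !mulr_ge0 ?invr_ge0 ?prodr_ge0 // ltW.
  have bk k : blue_offspring p d B x (k, Y k)
      = hx^-1 * d x m.+1 * (p x z * \prod_(j < m) p x (w j) * hR p d B z).
    rewrite bo_simpl // (bigD1_ord k) //= Yk; congr (_ * (_ * _ * _)).
    by apply: eq_bigr => j _; rewrite Yl.
  under eq_bigr do rewrite bk.
  rewrite sumEFin sumr_const card_ord; congr EFin.
  rewrite /dsb /ph (negbTE xB) -/mx -/hx -[in LHS]mulr_natl.
  by field; rewrite ?mxn0 ?hxn0.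
Qed.
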